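(* Let $k\ge1$, $\lambda_0>0$, and let $Q(x,dy)$ be a spatially homogeneous Markov kernel on $\mathbf{R}^k$ (i.e. $Q(x,dy)=Q(x-z,dy-z)$ and $Q(z,\mathbf{R}^k)=1$ for all $x,z$) with $Q(0,\{0\})=0$ and symmetric with respect to Lebesgue measure, $Q(x,dy)dx=Q(y,dx)dy$. Consider the compound Poisson process $X_t=x+\sum_{n=1}^{N_t}\xi_n$, where $N$ is a Poisson process with rate $\lambda_0$ and $(\xi_n)$ are i.i.d. with law $Q(0,\cdot)$ independent of $N$; it is symmetric with respect to $m(dx)=\lambda_0^{-1}dx$, and its associated Dirichlet form on $L^2(\mathbf{R}^k,m)$ is $\mathcal{F}=L^2(\mathbf{R}^k,m)$, $\mathcal{E}(u,v)=\frac12\int_{\mathbf{R}^k\times\mathbf{R}^k}(u(x)-u(y))(v(x)-v(y))Q(x,dy)\lambda_0\,m(dx)$, a regular Dirichlet form. Then $(\mathcal{E},\mathcal{F})$ has no proper regular Dirichlet subspace: every regular Dirichlet subspace of $(\mathcal{E},\mathcal{F})$ equals $(\mathcal{E},\mathcal{F})$.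
   Context: A regular Dirichlet subspace of a regular Dirichlet form $(\mathcal{E},\mathcal{F})$ on $L^2(E,m)$ is a regular Dirichlet form $(\mathcal{E}',\mathcal{F}')$ on $L^2(E,m)$ with $\mathcal{F}'\subset\mathcal{F}$ and $\mathcal{E}'(u,v)=\mathcal{E}(u,v)$ for all $u,v\in\mathcal{F}'$; it is proper if it differs from $(\mathcal{E},\mathcal{F})$. *)

(* Defs.v *)
From HB Require Import structures.
From mathcomp Require Import all_boot all_order all_algebra.
From mathcomp Require Import all_classical all_reals all_analysis.
Set Implicit Arguments. Unset Strict Implicit. Unset Printing Implicit Defensive.
Import Order.TTheory GRing.Theory Num.Theory.
Local Open Scope classical_set_scope.
Local Open Scope ring_scope.

(** Elements of L^2 are represented by measurable real functions; a form is a
    pair (F, E) with F a set of representatives (closed under m-a.e. equality)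
    and E a real-valued map on pairs of functions whose values on F only
    depend on the a.e. classes. *)
Section DirichletGeneric.
Context {d : measure_display} {T : measurableType d} {R : realType}.
Variable m : {measure set T -> \bar R}.

Definition l2sq (f : T -> R) : \bar R := (\int[m]_x ((f x) ^+ 2)%:E)%E.

Definition L2 : set (T -> R) :=
  [set f | measurable_fun setT f /\ (l2sq f < +oo)%E].

Definition ae_equal (f g : T -> R) : Prop := {ae m, forall x, f x = g x}.

Definition E1sq (E : (T -> R) -> (T -> R) -> R) (w : T -> R) : \bar R :=
  ((E w w)%:E + l2sq w)%E.

Definition is_L2_subspace (F : set (T -> R))
    (E : (T -> R) -> (T -> R) -> R) : Prop :=
  [/\ F `<=` L2,
      F (fun _ => 0),
      (forall (a : R) f g, F f -> F g -> F (fun x => a * f x + g x)),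
      (forall f g, F f -> L2 g -> ae_equal f g -> F g)
    & (forall f f' g g', F f -> F f' -> F g -> F g' ->
         ae_equal f f' -> ae_equal g g' -> E f g = E f' g')].

Definition dense_in_L2 (F : set (T -> R)) : Prop :=
  forall f, L2 f -> forall e : R, 0 < e ->
    exists g, F g /\ (l2sq (fun x => (f x - g x)%R) < e%:E)%E.

Definition symmetric_form (F : set (T -> R))
    (E : (T -> R) -> (T -> R) -> R) : Prop :=
  [/\ (forall f g, F f -> F g -> E f g = E g f),
      (forall (a : R) f g h, F f -> F g -> F h ->
         E (fun x => a * f x + g x) h = a * E f h + E g h)
    & (forall f, F f -> 0 <= E f f)].

Definition closed_form (F : set (T -> R))
    (E : (T -> R) -> (T -> R) -> R) : Prop :=
  forall u : nat -> T -> R, (forall n, F (u n)) ->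
    (forall e : R, 0 < e -> exists N, forall n p, (N <= n)%N -> (N <= p)%N ->
       (E1sq E (fun x => (u n x - u p x)%R) < e%:E)%E) ->
    exists2 v, F v &
      forall e : R, 0 < e -> exists N, forall n, (N <= n)%N ->
        (E1sq E (fun x => (u n x - v x)%R) < e%:E)%E.

Definition markovian (F : set (T -> R))
    (E : (T -> R) -> (T -> R) -> R) : Prop :=
  forall u, F u ->
    F (fun x => Num.min (Num.max 0 (u x)) 1) /\
    E (fun x => Num.min (Num.max 0 (u x)) 1) (fun x => Num.min (Num.max 0 (u x)) 1)
      <= E u u.

Definition is_dirichlet_form (F : set (T -> R))
    (E : (T -> R) -> (T -> R) -> R) : Prop :=
  [/\ is_L2_subspace F E, dense_in_L2 F, symmetric_form F E,
      closed_form F E & markovian F E].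

End DirichletGeneric.

(** * The state space R^k, as k-tuples of reals (with the product, i.e.
    Borel, sigma-algebra generated by the coordinates). *)
Section Rk.
Context {R : realType} {k : nat}.

Definition tsub (x z : k.-tuple R) : k.-tuple R :=
  [tuple tnth x i - tnth z i | i < k].

Definition tzero : k.-tuple R := [tuple (0 : R) | i < k].

Definition box (a b : k.-tuple R) : set (k.-tuple R) :=
  [set x | forall i, tnth a i < tnth x i <= tnth b i].
Definition box_vol (a b : k.-tuple R) : R :=
  \prod_(i < k) Num.max 0 (tnth b i - tnth a i).

Definition continuous_Rk (f : k.-tuple R -> R) : Prop :=
  forall (x : k.-tuple R) (e : R), 0 < e -> exists2 delta : R, 0 < delta &
    forall y, (forall i, `|tnth y i - tnth x i| < delta) -> `|f y - f x| < e.

Definition compact_support_Rk (f : k.-tuple R -> R) : Prop :=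
  exists M : R, forall x, (exists i, M < `|tnth x i|) -> f x = 0.

Definition Cc_Rk (f : k.-tuple R -> R) : Prop :=
  continuous_Rk f /\ compact_support_Rk f.

Variable m : {measure set (k.-tuple R) -> \bar R}.

Definition is_regular_dirichlet_form (F : set (k.-tuple R -> R))
    (E : (k.-tuple R -> R) -> (k.-tuple R -> R) -> R) : Prop :=
  [/\ is_dirichlet_form m F E,
      (forall u, F u -> forall e : R, 0 < e -> exists g, [/\ F g, Cc_Rk g &
          (E1sq m E (fun x => (u x - g x)%R) < e%:E)%E])
    &
      (forall f, Cc_Rk f -> forall e : R, 0 < e -> exists g, [/\ F g, Cc_Rk g &
          forall x, `|f x - g x| < e])].

Definition is_regular_dirichlet_subspace (F : set (k.-tuple R -> R))
    (E : (k.-tuple R -> R) -> (k.-tuple R -> R) -> R)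
    (F' : set (k.-tuple R -> R))
    (E' : (k.-tuple R -> R) -> (k.-tuple R -> R) -> R) : Prop :=
  [/\ is_regular_dirichlet_form F' E', F' `<=` F &
      forall u v, F' u -> F' v -> E' u v = E u v].

End Rk.

Definition jump_form {R : realType} {k : nat} (lam0 : R)
    (m : {measure set (k.-tuple R) -> \bar R})
    (Q : R.-pker (k.-tuple R) ~> (k.-tuple R))
    (u v : k.-tuple R -> R) : R :=
  2^-1 * \int[m]_x (lam0 *
     \int[Q x]_y ((u x - u y) * (v x - v y)))%R.

(* Main.v *)
Require Import Defs.
From HB Require Import structures.
From mathcomp Require Import all_boot all_order all_algebra.
From mathcomp Require Import all_classical all_reals all_analysis.
From mathcomp Require Import measurable_realfun.
From mathcomp Require Import ring lra.
Set Implicit Arguments. Unset Strict Implicit. Unset Printing Implicit Defensive.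
Import Order.TTheory GRing.Theory Num.Theory.
Import numFieldTopology.Exports.
Local Open Scope classical_set_scope.
Local Open Scope ring_scope.

Section l2.
Context d (T : measurableType d) (R : realType).
Variable m : {measure set T -> \bar R}.

Lemma l2sq_ge0 f : (0 <= l2sq m f)%E.
Proof. by apply: integral_ge0 => x _; rewrite lee_fin sqr_ge0. Qed.

Lemma msq (f : T -> R) : measurable_fun setT f ->
  measurable_fun setT (fun x => ((f x) ^+ 2)%:E).
Proof. by move=> mf; apply/measurable_EFinP; exact: measurable_funX. Qed.

Lemma l2sq_sym (a b : T -> R) :
  l2sq m (fun x => a x - b x) = l2sq m (fun x => b x - a x).
Proof. by apply: eq_integral => x _; rewrite -opprB sqrrN. Qed.

Lemma l2sq_tri (a b c : T -> R) : measurable_fun setT a ->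
  measurable_fun setT b -> measurable_fun setT c ->
  (l2sq m (fun x => a x - b x)%R <=
   2%:E * l2sq m (fun x => a x - c x)%R + 2%:E * l2sq m (fun x => c x - b x)%R)%E.
Proof.
move=> ma mb mc; rewrite /l2sq.
rewrite -ge0_integralZl//; last by move=> x _; rewrite lee_fin sqr_ge0.
rewrite -[X in (_ + X)%E]ge0_integralZl//; last by move=> x _; rewrite lee_fin sqr_ge0.
rewrite -ge0_integralD//; first last.
- by apply: measurable_funeM; apply: msq; exact: measurable_funB.
- by move=> x _; rewrite -EFinM lee_fin mulr_ge0// sqr_ge0.
- by apply: measurable_funeM; apply: msq; exact: measurable_funB.
- by move=> x _; rewrite -EFinM lee_fin mulr_ge0// sqr_ge0.
apply: ge0_le_integral => //.
- by move=> x _; rewrite lee_fin sqr_ge0.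
- by apply: msq; exact: measurable_funB.
- by apply: emeasurable_funD; apply: measurable_funeM; apply: msq; exact: measurable_funB.
- move=> x _; rewrite -!EFinM -EFinD lee_fin.
  set u := (a x - c x)%R; set v := (c x - b x)%R.
  have -> : (a x - b x = u + v)%R by rewrite /u /v addrA subrK.
  rewrite -subr_ge0.
  have -> : (2 * u ^+ 2 + 2 * v ^+ 2 - (u + v) ^+ 2 = (u - v) ^+ 2)%R by ring.
  exact: sqr_ge0.
all: by apply: msq; exact: measurable_funB.
Qed.

End l2.
Section icomp.
Context d (X : measurableType d) (R : realType).
Variables (m : {measure set X -> \bar R}) (Q : R.-ker X ~> X).
Hypothesis hQm : forall A, measurable A -> (\int[m]_x Q x A = m A)%E.
Local Open Scope ereal_scope.
Import HBNNSimple.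

Let icomp_indic E (mE : measurable E) :
  \int[m]_z (\1_E z)%:E = \int[m]_y (\int[Q y]_z (\1_E z)%:E).
Proof.
rewrite integral_indic// setIT -hQm//.
by apply: eq_integral => y _; rewrite integral_indic// setIT.
Qed.

Let icomp_nnsfun (f : {nnsfun X >-> R}) :
  \int[m]_z (f z)%:E = \int[m]_y (\int[Q y]_z (f z)%:E).
Proof.
under [in LHS]eq_integral do rewrite fimfunE -fsumEFin//.
rewrite ge0_integral_fsum//; last 2 first.
  - by move=> r; exact/measurable_EFinP/measurableT_comp.
  - by move=> r z _; rewrite EFinM nnfun_muleindic_ge0.
under [in RHS]eq_integral.
  move=> y _.
  under eq_integral.
    by move=> z _; rewrite fimfunE -fsumEFin//; over.
  rewrite /= ge0_integral_fsum//; last 2 first.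
    - by move=> r; exact/measurable_EFinP/measurableT_comp.
    - by move=> r z _; rewrite EFinM nnfun_muleindic_ge0.
  under eq_fsbigr.
    move=> r _.
    rewrite (integralZl_indic _ (fun r => f @^-1` [set r]))//; last first.
      by move=> r0; rewrite preimage_nnfun0.
    rewrite integral_indic// setIT.
    over.
  over.
rewrite /= ge0_integral_fsum//; last 2 first.
  - move=> r; apply: measurable_funeM.
    exact: (measurable_kernel Q (f @^-1` [set r]) _).
  - move=> n y _.
    have := mulemu_ge0 (fun n => f @^-1` [set n]).
    by apply; exact: preimage_nnfun0.
apply: eq_fsbigr => r _.
rewrite (integralZl_indic _ (fun r => f @^-1` [set r]))//; last first.
  exact: preimage_nnfun0.
rewrite /= icomp_indic//.
have [r0|r0] := leP 0%R r.
  rewrite ge0_integralZl//.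
    by under eq_integral do rewrite integral_indic// setIT.
  exact: (measurable_kernel Q (f @^-1` [set r]) _).
rewrite integral0_eq ?mule0.
  by rewrite integral0_eq// => y _; rewrite preimage_nnfun0// measure0 mule0.
by move=> y _; rewrite integral0_eq// => z _; rewrite preimage_nnfun0// indic0.
Qed.

Lemma icomp f : (forall z, 0 <= f z) -> measurable_fun [set: X] f ->
  \int[m]_z f z = \int[m]_y (\int[Q y]_z f z).
Proof.
move=> f0 mf.
pose f_ := nnsfun_approx measurableT mf.
transitivity (\int[m]_z (lim ((f_ n z)%:E @[n --> \oo]))).
  by apply/eq_integral => z _; apply/esym/cvg_lim => //=; exact: cvg_nnsfun_approx.
rewrite monotone_convergence//; last 3 first.
  by move=> n; exact/measurable_EFinP.
  by move=> n z _; rewrite lee_fin.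
  by move=> z _ a b ab; rewrite lee_fin; exact/lefP/nd_nnsfun_approx.
rewrite (_ : (fun _ => _) =
    (fun n => \int[m]_y (\int[Q y]_z (f_ n z)%:E)))//; last first.
  by apply/funext => n; rewrite icomp_nnsfun.
transitivity (\int[m]_y lim ((\int[Q y]_z (f_ n z)%:E) @[n --> \oo])).
  rewrite -monotone_convergence//; last 3 first.
  - move=> n; apply: measurable_fun_integral_kernel => //.
    + by move=> U mU; exact: (measurable_kernel Q _ mU).
    + by move=> z; rewrite lee_fin.
    + exact/measurable_EFinP.
  - by move=> n y _; apply: integral_ge0 => // z _; rewrite lee_fin.
  - move=> y _ a b ab; apply: ge0_le_integral => //.
    + by move=> z _; rewrite lee_fin.
    + exact/measurable_EFinP.
    + exact/measurable_EFinP.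
    + by move=> z _; rewrite lee_fin; exact/lefP/nd_nnsfun_approx.
apply: eq_integral => y _; rewrite -monotone_convergence//; last 3 first.
  - by move=> n; exact/measurable_EFinP.
  - by move=> n z _; rewrite lee_fin.
  - by move=> z _ a b ab; rewrite lee_fin; exact/lefP/nd_nnsfun_approx.
by apply: eq_integral => z _; apply/cvg_lim => //; exact: cvg_nnsfun_approx.
Qed.
End icomp.

Section ebound.
Context (R : realType) (k : nat) (lam0 : R)
  (m : {measure set (k.-tuple R) -> \bar R})
  (Q : R.-pker (k.-tuple R) ~> (k.-tuple R)).
Hypothesis lam0_gt0 : 0 < lam0.
Hypothesis hQm : forall A, measurable A -> (\int[m]_x Q x A = m A)%E.

Lemma Ebound (w : k.-tuple R -> R) : measurable_fun setT w ->
  (l2sq m w < +oo)%E ->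
  jump_form lam0 m Q w w <= 4 * lam0 * fine (l2sq m w).
Proof.
move=> mw fw.
pose G x := (\int[Q x]_y ((w x - w y) * (w x - w y))%:E)%E.
have mG : measurable_fun setT G.
  apply: (measurable_fun_integral_finite_kernel
    (fun z => ((w z.1 - w z.2) * (w z.1 - w z.2))%:E) Q).
    by move=> z /=; rewrite lee_fin -expr2 sqr_ge0.
  apply/measurable_EFinP; apply: measurable_funM;
    (apply: measurable_funB; [exact: measurableT_comp mw measurable_fst|
                               exact: measurableT_comp mw measurable_snd]).
have G0 x : (0 <= G x)%E.
  by apply: integral_ge0 => y _; rewrite lee_fin -expr2 sqr_ge0.
have mw2 : measurable_fun setT (fun y => (w y ^+ 2)%:E) by exact: msq.
have HG x : (G x <= (2 * w x ^+ 2)%:E + 2%:E * \int[Q x]_y (w y ^+ 2)%:E)%E.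
  rewrite /G.
  apply: (@le_trans _ _ (\int[Q x]_y ((2 * w x ^+ 2)%:E + (2 * w y ^+ 2)%:E))%E).
    apply: ge0_le_integral => //.
    - by move=> y _; rewrite lee_fin -expr2 sqr_ge0.
    - apply/measurable_EFinP; apply: measurable_funM;
        by apply: measurable_funB => //; exact: measurable_cst.
    - apply: emeasurable_funD; first exact: measurable_cst.
      apply/measurable_EFinP; apply: measurable_funM; first exact: measurable_cst.
      exact: measurable_funX.
    - move=> y _; rewrite -EFinD lee_fin -subr_ge0.
      have -> : (2 * w x ^+ 2 + 2 * w y ^+ 2 - (w x - w y) * (w x - w y) =
                 (w x + w y) ^+ 2)%R by ring.
      exact: sqr_ge0.
  rewrite ge0_integralD//; first last.
  all: try (by move=> y _; rewrite lee_fin mulr_ge0// sqr_ge0).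
  all: try exact: measurable_cst.
  all: try (apply/measurable_EFinP; apply: measurable_funM; first exact: measurable_cst;
    exact: measurable_funX).
  rewrite integral_cst// prob_kernel mule1.
  under eq_integral do rewrite EFinM.
  rewrite ge0_integralZl//.
  by move=> y _; rewrite lee_fin sqr_ge0.
have mQw : measurable_fun setT (fun x => \int[Q x]_y (w y ^+ 2)%:E)%E.
  apply: measurable_fun_integral_kernel => //.
    by move=> U mU; exact: (measurable_kernel Q _ mU).
  by move=> z; rewrite lee_fin sqr_ge0.
set L := l2sq m w.
have L0 : (0 <= L)%E by exact: l2sq_ge0.
have LE : L = (fine L)%:E by rewrite fineK// ge0_fin_numE.
have HI : (\int[m]_x G x <= (4 * fine L)%:E)%E.
  apply: (@le_trans _ _ (\int[m]_x ((2 * w x ^+ 2)%:E + 2%:E * \int[Q x]_y (w y ^+ 2)%:E))%E).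
    apply: ge0_le_integral => //.
    apply: emeasurable_funD.
      apply/measurable_EFinP; apply: measurable_funM; first exact: measurable_cst.
      exact: measurable_funX.
    exact: measurable_funeM.
  rewrite ge0_integralD//; first last.
  all: try (by move=> y _; rewrite lee_fin mulr_ge0// sqr_ge0).
  all: try (by move=> y _; rewrite mule_ge0//; apply: integral_ge0 => z _; rewrite lee_fin sqr_ge0).
  all: try exact: measurable_funeM.
  all: try (apply/measurable_EFinP; apply: measurable_funM; first exact: measurable_cst;
    exact: measurable_funX).
  rewrite ge0_integralZl//; last first.
    by move=> y _; apply: integral_ge0 => z _; rewrite lee_fin sqr_ge0.
  rewrite -(icomp hQm) //; last by move=> z; rewrite lee_fin sqr_ge0.
  under eq_integral do rewrite EFinM.
  rewrite ge0_integralZl//; last by move=> y _; rewrite lee_fin sqr_ge0.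
  rewrite -/(l2sq m w) -/L LE -!EFinM -EFinD lee_fin.
  lra.
have HJ : jump_form lam0 m Q w w =
    2^-1 * fine (\int[m]_x (lam0 * fine (G x))%:E)%E by [].
set I := (\int[m]_x (lam0 * fine (G x))%:E)%E in HJ.
have I0 : (0 <= I)%E.
  by apply: integral_ge0 => x _; rewrite lee_fin; apply: mulr_ge0; [exact: ltW | exact: fine_ge0].
have HI2 : (I <= (lam0 * (4 * fine L))%:E)%E.
  apply: (@le_trans _ _ (lam0%:E * \int[m]_x G x)%E); last first.
    by rewrite EFinM lee_wpmul2l// lee_fin ltW.
  rewrite -ge0_integralZl//; last by rewrite lee_fin ltW.
  apply: ge0_le_integral => //.
  - by move=> x _; rewrite lee_fin; apply: mulr_ge0; [exact: ltW | exact: fine_ge0].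
  - apply/measurable_EFinP; apply: measurable_funM; first exact: measurable_cst.
    exact: measurableT_comp mG.
  - by apply: measurable_funeM.
  - move=> x _; case: (G x) (G0 x) => [r||] /= H.
    + by rewrite EFinM.
    + by rewrite mulr0; apply: mule_ge0 => //; rewrite lee_fin ltW.
    + by rewrite leeNy_eq in H.
have Ifin : I \is a fin_num.
  by rewrite ge0_fin_numE// (le_lt_trans HI2)// ltry.
have : fine I <= lam0 * (4 * fine L).
  by rewrite -lee_fin fineK.
have FI : 0 <= fine I by exact: fine_ge0.
rewrite HJ => h.
lra.
Qed.
End ebound.
Lemma hQm_of_sym d (X : measurableType d) (R : realType) (lam0 : R)
  (m : {measure set X -> \bar R}) (Q : R.-pker X ~> X) : 0 < lam0 ->
  (forall C : set (X * X), measurable C ->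
     (lam0%:E * \int[m]_x Q x (xsection C x) =
      lam0%:E * \int[m]_y Q y (ysection C y))%E) ->
  forall A, measurable A -> (\int[m]_x Q x A = m A)%E.
Proof.
move=> l0 hs A mA; have := hs (setT `*` A) (measurableX measurableT mA).
under eq_integral do rewrite in_xsectionX ?in_setT//.
under [X in _ = (_ * X)%E -> _]eq_integral => y _.
  have -> : Q y (ysection (setT `*` A) y) = (\1_A y)%:E.
    rewrite indicE; have [Ay|nAy] := boolP (y \in A).
      rewrite (_ : ysection _ _ = setT) ?prob_kernel//.
      apply/seteqP; split => x //= _.
      by rewrite /ysection /=; apply/mem_set; split => //; exact/set_mem.
    rewrite (_ : ysection _ _ = set0) ?measure0//.
    apply/seteqP; split => x //=; rewrite /ysection /= => /set_mem [_ Ay].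
    by move: nAy; rewrite (mem_set Ay).
  over.
rewrite integral_indic// setIT => h.
have := congr1 (fun z => ((lam0^-1)%:E * z)%E) h.
by rewrite /= !muleA -EFinM mulVf ?gt_eqF// !mul1e.
Qed.

Lemma finE' (R : realType) (x : \bar R) : x \is a fin_num -> exists r : R, x = r%:E.
Proof. by move=> h; exists (fine x); rewrite fineK. Qed.

Lemma arch_inv (R : realType) (c e : R) : 0 <= c -> 0 < e ->
  exists N, forall n, (N <= n)%N -> c * (n.+1%:R)^-1 < e.
Proof.
move=> c0 e0; exists (Num.truncn (c / e)) => n Nn.
have h : c / e < n.+1%:R.
  apply: (lt_le_trans (truncnS_gt _)); rewrite ler_nat; exact: Nn.
rewrite ltr_pdivrMr// in h.
by rewrite ltr_pdivrMr// mulrC.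
Qed.

Theorem corollary4p2 (R : realType) (k : nat) (lam0 : R)
    (m : {measure set (k.-tuple R) -> \bar R})
    (Q : R.-pker (k.-tuple R) ~> (k.-tuple R)) :
  (1 <= k)%N ->
  0 < lam0 ->
  (* m(dx) = lam0^{-1} dx, i.e. m is lam0^{-1} times Lebesgue measure on R^k *)
  (forall a b : k.-tuple R, m (box a b) = (lam0^-1 * box_vol a b)%:E) ->
  (* spatial homogeneity: Q(x, dy) = Q(x - z, dy - z) *)
  (forall (x z : k.-tuple R) (A : set (k.-tuple R)), measurable A ->
     Q x A = Q (tsub x z) [set tsub y z | y in A]) ->
  (* Q(0, {0}) = 0 *)
  Q tzero [set tzero] = 0%E ->
  (* symmetry w.r.t. Lebesgue measure dx = lam0 m(dx): Q(x,dy)dx = Q(y,dx)dy *)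
  (forall C : set (k.-tuple R * k.-tuple R), measurable C ->
     (lam0%:E * \int[m]_x Q x (xsection C x) =
      lam0%:E * \int[m]_y Q y (ysection C y))%E) ->
  forall (F' : set (k.-tuple R -> R))
         (E' : (k.-tuple R -> R) -> (k.-tuple R -> R) -> R),
    is_regular_dirichlet_subspace m (L2 m) (jump_form lam0 m Q) F' E' ->
    F' = L2 m /\
    (forall u v, L2 m u -> L2 m v -> E' u v = jump_form lam0 m Q u v).
Proof.
move=> _ l0 _ _ _ hsym F' E' [[[[FL2 F0 Flin Fae Eae] dense [Esym Elin Epos] closed _] _ _] _ EE'].
have hQm := hQm_of_sym l0 hsym.
have Fsub f g : F' f -> F' g -> F' (fun x => f x - g x).
  move=> Ff Fg; have := Flin (-1) g f Fg Ff.
  by congr F'; apply/funext => x; rewrite mulN1r addrC.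
have E1up w : F' w -> (E1sq m E' w <= ((4 * lam0 + 1) * fine (l2sq m w))%:E)%E.
  move=> Fw; have [mw fw] := FL2 _ Fw.
  rewrite /E1sq EE' // -[X in (_ + X)%E]fineK ?ge0_fin_numE ?l2sq_ge0// -EFinD lee_fin.
  have := Ebound l0 hQm mw fw; lra.
have E1lo w : F' w -> (l2sq m w <= E1sq m E' w)%E.
  by move=> Fw; rewrite /E1sq leeDr// lee_fin Epos.
have finE (w : k.-tuple R -> R) (r : R) : (l2sq m w < r%:E)%E -> l2sq m w \is a fin_num.
  by move=> h; rewrite ge0_fin_numE ?l2sq_ge0// (lt_le_trans h)// leey.
have key f : L2 m f -> F' f.
  move=> Lf; have [mf ff] := Lf.
  have dn n : exists g, F' g /\ (l2sq m (fun x => f x - g x)%R < (n.+1%:R^-1)%:E)%E.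
    by apply: dense => //; rewrite invr_gt0 ltr0Sn.
  pose g n := proj1_sig (cid (dn n)).
  have Fg n : F' (g n) := (proj2_sig (cid (dn n))).1.
  have fg n : (l2sq m (fun x => f x - g n x)%R < (n.+1%:R^-1)%:E)%E :=
    (proj2_sig (cid (dn n))).2.
  have mg n : measurable_fun setT (g n) := (FL2 _ (Fg n)).1.
  have Ng n p : fine (l2sq m (fun x => g n x - g p x)%R) <=
      2 * n.+1%:R^-1 + 2 * p.+1%:R^-1.
    have h := l2sq_tri m (mg n) (mg p) mf.
    rewrite (l2sq_sym m (g n) f) in h.
    have fa := finE _ _ (fg n); have fb := finE _ _ (fg p).
    have fc : l2sq m (fun x => g n x - g p x)%R \is a fin_num.
      rewrite ge0_fin_numE ?l2sq_ge0//; apply: (le_lt_trans h).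
      by rewrite -(fineK fa) -(fineK fb) -!EFinM -EFinD ltry.
    have [a ea] := finE' fa; have [b eb] := finE' fb; have [c ec] := finE' fc.
    have := fg n; have := fg p.
    move: h; rewrite ea eb ec /= -!EFinM -EFinD lee_fin !lte_fin.
    set u := n.+1%:R^-1; set v := p.+1%:R^-1; lra.
  have K0 : 0 <= 4 * lam0 + 1 by lra.
  have Hc : forall e, 0 < e -> exists N, forall n p, (N <= n)%N -> (N <= p)%N ->
      (E1sq m E' (fun x => g n x - g p x)%R < e%:E)%E.
    move=> e e0.
    have [N hN] := arch_inv (mulr_ge0 K0 (ler0n _ 2)) (divr_gt0 e0 (ltr0n _ 2)).
    exists N => n p nN pN.
    apply: le_lt_trans (E1up _ (Fsub _ _ (Fg n) (Fg p))) _.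
    rewrite lte_fin; apply: le_lt_trans (ler_wpM2l K0 (Ng n p)) _.
    have := hN n nN; have := hN p pN.
    set K := 4 * lam0 + 1; set u := n.+1%:R^-1; set w := p.+1%:R^-1.
    have -> : K * (2 * u + 2 * w) = K * 2%:R * u + K * 2%:R * w by ring.
    lra.
  have [v Fv cv] := closed g Fg Hc.
  have mv : measurable_fun setT v := (FL2 _ Fv).1.
  have Hlt e : 0 < e -> (l2sq m (fun x => f x - v x)%R < e%:E)%E.
    move=> e0.
    have [N1 h1] := cv _ (divr_gt0 e0 (ltr0n _ 4)).
    have [N2 h2] := arch_inv (@ler01 R) (divr_gt0 e0 (ltr0n _ 4)).
    pose n := maxn N1 N2.
    have hB : (l2sq m (fun x => g n x - v x)%R < (e / 4%:R)%:E)%E.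
      apply: le_lt_trans (h1 n (leq_maxl _ _)).
      exact: E1lo (Fsub _ _ (Fg n) Fv).
    have hA := fg n.
    have hn := h2 n (leq_maxr _ _).
    have h := l2sq_tri m mf mv (mg n).
    have fa := finE _ _ hA; have fb := finE _ _ hB.
    have [a ea] := finE' fa; have [b eb] := finE' fb.
    apply: le_lt_trans h _.
    move: hA hB; rewrite ea eb -!EFinM -EFinD !lte_fin.
    move: hn; set u := n.+1%:R^-1; lra.
  have Z : l2sq m (fun x => f x - v x)%R = 0%E.
    move: (l2sq_ge0 m (fun x => f x - v x)%R) Hlt.
    case: (l2sq _ _) => [r||] //.
    - rewrite lee_fin le_eqVlt => /orP [/eqP <- // | r0] /(_ r r0).
      by rewrite ltxx.
    - by move=> _ /(_ 1 ltr01).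
  have mfv : measurable_fun setT (fun x => ((f x - v x) ^+ 2)%:E).
    by apply: msq; exact: measurable_funB.
  have hZ : (\int[m]_x `|((f x - v x) ^+ 2)%:E| = 0)%E.
    by rewrite -Z; apply: eq_integral => x _; rewrite gee0_abs// lee_fin sqr_ge0.
  have hae := (ae_eq_integral_abs m measurableT mfv).1 hZ.
  apply: (Fae v f Fv Lf); rewrite /ae_equal.
  apply: filterS hae => x /(_ I) /eqP.
  by rewrite eqe sqrf_eq0 subr_eq0 => /eqP ->.
have eqF : F' = L2 m by apply/seteqP; split => u; [exact: FL2 | exact: key].
split => // u w Lu Lw; apply: EE'; exact: key.
Qed.
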